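(* Let $p\neq 2$ and $q\neq 2$ be primes and let $\lambda_1\le\cdots\le\lambda_n$ be positive integers. Set $G=Z_{p^{\lambda_1}}\times\cdots\times Z_{p^{\lambda_n}}$ and $G'=Z_{q^{\lambda_1}}\times\cdots\times Z_{q^{\lambda_n}}$. Then $\mathrm{Char}(G)\cong\mathrm{Char}(G')$.
   Context: $\mathrm{Char}(G)$ denotes the lattice of characteristic subgroups of $G$. *)

(* Defs.v *)
From mathcomp Require Import all_boot all_order all_fingroup all_solvable.
Set Implicit Arguments.
Unset Strict Implicit.
Unset Printing Implicit Defensive.

Local Open Scope group_scope.

Definition Char (gT : finGroupType) (G : {group gT}) : {set {group gT}} :=
  [set H : {group gT} | H \char G].

(* Isomorphism of the lattices Char(G) and Char(G'): an inclusion-preserving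
   and inclusion-reflecting bijection between them (an order isomorphism of
   lattices is the same as a lattice isomorphism). *)
Definition Char_iso (gT gT' : finGroupType) (G : {group gT}) (G' : {group gT'}) :=
  exists (f : {group gT} -> {group gT'}) (g : {group gT'} -> {group gT}),
    [/\ {in Char G, forall H, f H \in Char G'},
        {in Char G', forall K, g K \in Char G},
        {in Char G, cancel f g},
        {in Char G', cancel g f} &
        {in Char G &, forall H K, (f H \subset f K) = (H \subset K)}].

(* Main.v *)
Require Import Defs.
From mathcomp Require Import all_boot all_order all_fingroup all_solvable.
From mathcomp Require Import zify.
Set Implicit Arguments.
Unset Strict Implicit.
Unset Printing Implicit Defensive.
Local Open Scope group_scope.
Section Gen.
Variable gT : finGroupType.
Implicit Types (G : {group gT}).

Lemma Ohm_bigdprod k I r P (F: I -> {set gT}) G :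
    \big[dprod/1]_(i <- r | P i) F i = G ->
  \big[dprod/1]_(i <- r | P i) 'Ohm_k(F i) = 'Ohm_k(G).
Proof.
elim/big_ind2: _ G => [_ <-|A B C D IHA IHB G dG|_ _ G ->]; rewrite ?Ohm1 //.
case/dprodP: dG IHA IHB (dG) => [[H K -> ->] _ _ _] IHH IHK dG.
by rewrite (IHH H) // (IHK K) // (Ohm_dprod k dG).
Qed.

Lemma Mho_bigdprod k I r P (F: I -> {set gT}) G :
    \big[dprod/1]_(i <- r | P i) F i = G ->
  \big[dprod/1]_(i <- r | P i) 'Mho^k(F i) = 'Mho^k(G).
Proof.
elim/big_ind2: _ G => [_ <-|A B C D IHA IHB G dG|_ _ G ->]; rewrite ?Mho1 //.
case/dprodP: dG IHA IHB (dG) => [[H K -> ->] _ _ _] IHH IHK dG.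
by rewrite (IHH H) // (IHK K) // (Mho_dprod k dG).
Qed.
End Gen.

Definition valid n (lam : 'I_n -> nat) (e : 'I_n -> nat) :=
  (forall i, e i <= lam i)%N /\
  (forall i j, lam j - e j <= (lam j - lam i) + (lam i - e i))%N.

Section Main.
Variables (gT : finGroupType) (p n : nat) (lam : 'I_n -> nat).
Variables (G : {group gT}) (x : 'I_n -> gT).
Hypotheses (pr_p : prime p) (p2 : p != 2).
Hypothesis defG : \big[dprod/1]_(i < n) <[x i]> = G.
Hypothesis ox : forall i, #[x i] = (p ^ lam i)%N.

Lemma xG i : x i \in G.
Proof.
rewrite -(bigdprodWY defG) mem_gen //.
by apply: (subsetP (bigcup_sup i _)) => //; apply: cycle_id.
Qed.

Lemma abelG : abelian G.
Proof.
apply/center_idP; rewrite -(center_bigdprod defG).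
transitivity (\big[dprod/1]_(i < n) <[x i]>); last exact: defG.
by apply: eq_bigr => i _; apply/center_idP/cycle_abelian.
Qed.

Lemma p_x i : p.-elt (x i).
Proof. by rewrite /p_elt ox pnatX pnat_id. Qed.

Lemma pG : p.-group G.
Proof.
rewrite /pgroup -(bigdprod_card defG); elim/big_ind: _ => //.
  by move=> a b; rewrite pnatM => -> ->.
by move=> i _; rewrite -orderE; apply: p_x.
Qed.

Lemma odd_p : odd p.
Proof. by apply/negbNE/negP => /(prime_oddPn pr_p) /eqP; rewrite (negPf p2). Qed.

Definition K j : {group gT} := <<\bigcup_(k < n | k != j) <[x k]> >>%G.

Lemma defK j : <[x j]> \x K j = G.
Proof.
move: defG; rewrite (bigD1 j) //= => dG.
have [[A B eA eB] _ _ _] := dprodP dG.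
rewrite eB in dG; rewrite -dG; congr (_ \x _).
by rewrite /K /= (bigdprodWY eB).
Qed.

Lemma xK j k : k != j -> x k \in K j.
Proof.
move=> kj; rewrite mem_gen //.
by apply: (subsetP (bigcup_sup k _)) => //; apply: cycle_id.
Qed.

Lemma KG j : K j \subset G.
Proof. by have /dprodP[_ <- _ _] := defK j; apply: mulG_subr. Qed.


Lemma char_stab (H : {group gT}) j t : H \char G -> t \in G -> 
  forall dvt : #[t] %| #[x j], x j \in <[t]> * K j ->
  forall m r, r \in K j -> x j ^+ m * r \in H -> t ^+ m * r \in H.
Proof.
move=> chH tG dvt xjt m r rK hH.
have cfHK : idm (K j) @* K j \subset 'C(eltm dvt @* <[x j]>).
  rewrite im_eltm morphim_idm //.
  by apply: sub_abelian_cent2 abelG _ _; rewrite ?KG ?cycle_subG.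
set phi := dprodm (defK j) cfHK.
have imE : phi @* G = <[t]> * K j by rewrite /phi im_dprodm im_eltm morphim_idm.
have im : phi @* G = G.
  apply/eqP; rewrite eqEsubset; apply/andP; split.
    by rewrite imE mul_subG ?KG ?cycle_subG.
  rewrite -{1}(dprodW (defK j)); apply: mul_subG; first by rewrite cycle_subG /= imE.
  by rewrite /= imE mulG_subr.
have inj : 'injm phi by rewrite -card_im_injm im.
have /charP[sHG /(_ phi inj im) fH] := chH.
have hG : x j ^+ m * r \in G by apply: (subsetP sHG).
have := mem_morphim phi hG hH.
rewrite fH /phi /= (dprodmE (defK j) cfHK) ?groupX ?cycle_id // /= eltmE.
by [].
Qed.

Lemma sqrt_mem (H : {group gT}) y : y \in G -> y ^+ 2 \in H -> y \in H.
Proof.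
move=> yG y2H.
have [k ok] := p_natP (mem_p_elt pG yG).
have oy : odd #[y] by rewrite ok oddX odd_p orbT.
have e : (#[y].+1 = 2 * (#[y].+1)./2)%N.
  by rewrite -{1}(odd_double_half #[y].+1) /= oy /= add0n -mul2n.
suff -> : y = (y ^+ 2) ^+ (#[y].+1)./2 by rewrite groupX.
by rewrite -expgM -e expgSr expg_order mul1g.
Qed.


Definition C (e : 'I_n -> nat) : {group gT} :=
  << \bigcup_(j < n) <[x j ^+ (p ^ (lam j - e j))]> >>%G.

Lemma C_cap e i : C e :&: <[x i]> = <[x i ^+ (p ^ (lam i - e i))]>.
Proof.
apply/eqP; rewrite eqEsubset; apply/andP; split; last first.
  rewrite subsetI cycleX andbT /C /= cycle_subG mem_gen //.
  by apply: (subsetP (bigcup_sup i _)) => //; apply: cycle_id.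
have cf : trivm (K i) @* K i \subset 'C(idm <[x i]> @* <[x i]>).
  by rewrite morphim_trivm sub1G.
set pi := dprodm (defK i) cf.
have sC : C e \subset pi @*^-1 <[x i ^+ (p ^ (lam i - e i))]>.
  rewrite /C /= gen_subG; apply/bigcupsP => j _; rewrite cycle_subG.
  apply: mem_morphpre; first by rewrite groupX ?xG.
  have [-> | ji] := eqVneq j i.
    by rewrite /pi /= (dprodmEl (defK i) cf) /= ?cycle_id //; apply: groupX (cycle_id _).
  by rewrite /pi /= (dprodmEr (defK i) cf) /= ?group1 //; apply: groupX (xK _).
apply/subsetP => g /setIP[gC gx].
have /morphpreP[_] := subsetP sC g gC.
by rewrite /pi /= (dprodmEl (defK i) cf).
Qed.

Lemma C_card e i : (e i <= lam i)%N -> logn p #|C e :&: <[x i]>| = e i.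
Proof.
by move=> le; rewrite C_cap -orderE (orderXexp _ (ox i)) subKn // pfactorK.
Qed.

Lemma C_sub e e' : (forall i, e i <= lam i)%N -> (forall i, e' i <= lam i)%N ->
  (C e \subset C e') = [forall i, e i <= e' i]%N.
Proof.
move=> le le'; apply/idP/forallP => [sC i | lee].
  have := cardSg (setSI <[x i]> sC); rewrite /= !C_cap -!orderE.
  rewrite !(orderXexp _ (ox i)) !subKn // dvdn_Pexp2l //.
  exact: prime_gt1.
rewrite /C /= gen_subG; apply/bigcupsP => j _; rewrite cycle_subG mem_gen //.
apply: (subsetP (bigcup_sup j _)) => //.
have -> : (lam j - e j = (lam j - e' j) + (e' j - e j))%N.
  move: (lee j) (le' j); lia.
by rewrite expnD expgM mem_cycle.
Qed.


Definition eH (H : {group gT}) i := logn p #|H :&: <[x i]>|.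

Lemma eH_le H i : (eH H i <= lam i)%N.
Proof.
rewrite /eH -(pfactorK (lam i) pr_p) -(ox i) orderE.
by apply: dvdn_leq_log; rewrite ?cardG_gt0 ?cardSg ?subsetIr.
Qed.

Lemma capH (H : {group gT}) i :
  H :&: <[x i]> = <[x i ^+ (p ^ (lam i - eH H i))]>.
Proof.
apply/eqP; rewrite (eq_subG_cyclic (cycle_cyclic (x i))) ?subsetIr ?cycleX //.
rewrite -orderE (orderXexp _ (ox i)) subKn ?eH_le //.
rewrite /eH -card_pgroup //; apply: pgroupS (subsetIr _ _) _.
exact: p_x.
Qed.

Lemma cfpi j : trivm (K j) @* K j \subset 'C(idm <[x j]> @* <[x j]>).
Proof. by rewrite morphim_trivm sub1G. Qed.

Definition pi j := dprodm (defK j) (cfpi j).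

Lemma piE j a b : a \in <[x j]> -> b \in K j -> pi j (a * b) = a.
Proof. by move=> aj bK; rewrite /pi /= (dprodmE (defK j) (cfpi j)) //= mulg1. Qed.

Lemma piEr j b : b \in K j -> pi j b = 1.
Proof. by move=> bK; rewrite /pi /= (dprodmEr (defK j) (cfpi j)). Qed.

Lemma piEl j a : a \in <[x j]> -> pi j a = a.
Proof. by move=> ax; rewrite -[a]mulg1 piE ?group1 // mulg1. Qed.

Lemma pi_prod j (c : 'I_n -> gT) : (forall i, c i \in <[x i]>) ->
  pi j (\prod_i c i) = c j.
Proof.
move=> cx; rewrite /pi /= (morph_prod (dprodm_morphism (defK j) (cfpi j))) => [|i _]; last first.
  by apply: (subsetP _ _ (cx i)); rewrite cycle_subG xG.
rewrite -/(pi j).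
have /cycleP[m cm] := cx j.
transitivity (\prod_(i < n) c j ^+ (i == j)).
  apply: eq_bigr => i _; have [-> | ij] := eqVneq i j.
    by rewrite expg1; apply: piEl.
  rewrite expg0; apply: piEr.
  by rewrite (subsetP (_ : <[x i]> \subset K j)) ?cx // cycle_subG xK.
rewrite prodgXr (bigD1 j) //= eqxx big1 ?addn0 ?expg1 // => i /negPf ->.
by [].
Qed.

Lemma char_C (H : {group gT}) : H \char G -> H :=: C (eH H).
Proof.
move=> chH; have sHG := char_sub chH.
apply/eqP; rewrite eqEsubset; apply/andP; split; last first.
  rewrite /C /= gen_subG; apply/bigcupsP => j _.
  by rewrite -capH subsetIl.
apply/subsetP => h hH.
have hG := subsetP sHG h hH.
have [c [cx hE _]] := mem_bigdprod defG hG.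
rewrite hE; apply: group_prod => j _.
suff cH : c j \in H.
  have : c j \in H :&: <[x j]> by rewrite inE cH cx.
  rewrite capH => cj; rewrite mem_gen //.
  by apply: (subsetP (bigcup_sup j _)).
have [a [b [ax bK hab _]]] := mem_dprod (defK j) hG.
have -> : c j = a.
  by rewrite -(pi_prod j (fun i => cx i isT)) -hE hab piE.
have /cycleP[m am] := ax.
have xjV : #[(x j)^-1] %| #[x j] by rewrite orderV.
have xjin : x j \in <[(x j)^-1]> * K j.
  by rewrite cycleV (subsetP (mulG_subl _ _)) ?cycle_id.
have := char_stab chH (groupVr (xG j)) xjV xjin bK.
move=> /(_ m); rewrite -am -hab => /(_ hH) yH.
have : h * ((x j)^-1 ^+ m * b)^-1 \in H by rewrite groupM ?groupV.
rewrite hab am invMg expVgn invgK mulgA mulgK -expgD addnn -mul2n mulnC expgM -am.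
by move=> a2; apply: (sqrt_mem _ a2); rewrite am groupX ?xG.
Qed.


Lemma char_valid (H : {group gT}) : H \char G -> forall i j,
  (lam j - eH H j <= (lam j - lam i) + (lam i - eH H i))%N.
Proof.
move=> chH i j; have [<- | ji] := eqVneq j i; first by lia.
have p1 := prime_gt1 pr_p.
set a := ((lam j - lam i) + (lam i - eH H i))%N.
set k := x j ^+ (p ^ (lam j - lam i)).
set m := (p ^ (lam i - eH H i))%N.
have kK : k \in K i by rewrite groupX ?xK.
have kG : k \in G by rewrite groupX ?xG.
have cxk : commute (x i) k by apply: (centsP abelG); rewrite ?xG.
have dvt : #[x i * k] %| #[x i].
  rewrite order_dvdn ox expgMn // -ox expg_order mul1g /k -expgM.
  rewrite ox -expnD -order_dvdn ox dvdn_Pexp2l //; lia.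
have xin : x i \in <[x i * k]> * K i.
  rewrite {1}(_ : x i = (x i * k) * k^-1); last by rewrite mulgK.
  by apply: mem_mulg; rewrite ?cycle_id ?groupV.
have xmH : x i ^+ m \in H.
  have : x i ^+ m \in H :&: <[x i]> by rewrite capH cycle_id.
  by case/setIP.
have := char_stab chH (groupM (xG i) kG) dvt xin (group1 _) (m := m).
rewrite !mulg1 => /(_ xmH); rewrite expgMn // groupMl // => kmH.
have : k ^+ m \in H :&: <[x j]> by rewrite inE kmH /k -expgM mem_cycle.
rewrite capH /k -expgM -expnD -/a => /order_dvdG.
rewrite -orderE !(orderXexp _ (ox j)) dvdn_Pexp2l //.
by have := eH_le H j; lia.
Qed.


Definition D (e : 'I_n -> nat) : {group gT} :=
  (\prod_(i < n) 'Mho^(lam i - e i)('Ohm_(lam i)(G))%G)%G.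

Lemma char_D e : D e \char G.
Proof.
rewrite /D; elim/big_ind: _ => [|A B cA cB|i _].
- exact: char1.
- exact: charY.
- exact: char_trans (Mho_char _ _) (Ohm_char _ _).
Qed.

Lemma D_eq_C e : (forall i, e i <= lam i)%N ->
  (forall i j, lam j - e j <= (lam j - lam i) + (lam i - e i))%N -> D e :=: C e.
Proof.
move=> le val; apply/eqP; rewrite eqEsubset; apply/andP; split.
  rewrite /D bigprodGE gen_subG; apply/bigcupsP => i _ /=.
  have dO := Ohm_bigdprod (lam i) defG.
  have dM := Mho_bigdprod (lam i - e i) dO.
  rewrite -(bigdprodWY dM) gen_subG; apply/bigcupsP => j _.
  rewrite (Ohm_p_cycle _ (p_x j)) (Mho_p_cycle _ (p_eltX _ (p_x j))).
  rewrite cycle_subG -expgM -expnD ox pfactorK //.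
  set a := ((lam j - lam i) + (lam i - e i))%N.
  have -> : a = ((lam j - e j) + (a - (lam j - e j)))%N by have := val i j; lia.
  rewrite expnD expgM mem_gen //; apply: (subsetP (bigcup_sup j _)) => //.
  exact: mem_cycle.
rewrite /C /= gen_subG; apply/bigcupsP => j _; rewrite cycle_subG.
rewrite /D bigprodGE mem_gen //; apply: (subsetP (bigcup_sup j _)) => //=.
apply: Mho_p_elt; last exact: p_x.
have sj : <[x j]> \subset G by rewrite cycle_subG xG.
apply: (subsetP (OhmS _ sj)).
by rewrite (Ohm_p_cycle _ (p_x j)) ox pfactorK // subnn expn0 expg1 cycle_id.
Qed.


Lemma summary :
 [/\ forall H : {group gT}, H \char G -> H = D (eH H) /\ valid lam (eH H),
     forall e, valid lam e -> forall i, eH (D e) i = e i,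
     forall e, D e \char G,
     forall e e', (forall i, e i = e' i) -> D e = D e' &
     forall e e', valid lam e -> valid lam e' ->
        (D e \subset D e') = [forall i, e i <= e' i]%N].
Proof.
split.
- move=> H chH; have v : valid lam (eH H).
    by split; [exact: eH_le | exact: char_valid].
  split=> //; apply: val_inj => /=.
  by rewrite (D_eq_C v.1 v.2) -char_C.
- by move=> e [le v] i; rewrite /eH (D_eq_C le v) C_card.
- exact: char_D.
- by move=> e e' E; rewrite /D; apply: eq_bigr => i _; rewrite E.
- move=> e e' [le v] [le' v'].
  by rewrite (D_eq_C le v) (D_eq_C le' v') C_sub.
Qed.

End Main.

Theorem mainTheorem7 (p q n : nat) (lam : 'I_n -> nat)
    (gT gT' : finGroupType) (G : {group gT}) (G' : {group gT'})
    (x : 'I_n -> gT) (y : 'I_n -> gT') :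
  prime p -> p != 2 -> prime q -> q != 2 ->
  (forall i, (0 < lam i)%N) ->
  (forall i j : 'I_n, (i <= j)%N -> (lam i <= lam j)%N) ->
  \big[dprod/1]_(i < n) <[x i]> = G ->
  (forall i, #[x i] = (p ^ lam i)%N) ->
  \big[dprod/1]_(i < n) <[y i]> = G' ->
  (forall i, #[y i] = (q ^ lam i)%N) ->
  Char_iso G G'.
Proof.
move=> pp p2 pq q2 _ _ dG ox dG' oy.
have [S1 S2 S3 S4 S5] := summary pp p2 dG ox.
have [T1 T2 T3 T4 T5] := summary pq q2 dG' oy.
exists (fun H => D lam G' (eH p x H)), (fun K => D lam G (eH q y K)).
split.
- by move=> H _; rewrite inE T3.
- by move=> K _; rewrite inE S3.
- move=> H; rewrite inE => /S1[E v] /=.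
  by rewrite {2}E; apply: S4 => i; rewrite T2.
- move=> K; rewrite inE => /T1[E v] /=.
  by rewrite {2}E; apply: T4 => i; rewrite S2.
- move=> H K; rewrite !inE => /S1[EH vH] /S1[EK vK].
  by rewrite T5 // {2}EH {2}EK S5.
Qed.
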